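(* Let $X$ be a set, $B=(B,+,0)$ a unitary magma and $(A,k,q,s,p)$ a retraction point from $X$ to $B$. Suppose that $k(x)+s(b+b')=(k(x)+s(b))+s(b')$ for all $x\in X$ and $b,b'\in B$. Then every retraction point of the form $(B,k',q',s',p')$ (from any set $Y$ to any unitary magma $C$) is composable with $(A,k,q,s,p)$.
   Context: A unitary magma is a set with a binary operation $+$ and an element $0$ with $b+0=b=0+b$ for all $b$; morphisms preserve $+$ and $0$. Given a set $X$ and a unitary magma $B$, a retraction point from $X$ to $B$ is a tuple $(A,k,q,s,p)$ where $A=(A,+,0)$ is a unitary magma, $k\colon X\to A$ and $q\colon A\to X$ are maps, $s\colon B\to A$ and $p\colon A\to B$ are morphisms of unitary magmas, and $p(s(b))=b$, $q(k(x))=x$, $p(k(x))=0$, $q(s(b))=q(0)$, and $k(q(a))+s(p(a))=a$ for all $x\in X$, $b\in B$, $a\in A$. Composability: let $(A,k,q,s,p)$ be a retraction point from $X$ to $B$ and $(B,k',q',s',p')$ a retraction point from a set $Y$ to a unitary magma $C$. Let $A\times_B Y=\{(a,y)\in A\times Y\mid p(a)=k'(y)\}$ with first projection $\pi_1\colon A\times_B Y\to A$, and define $q''\colon A\to A\times_B Y$ by $q''(a)=\big(k(q(a))+s(k'(q'(p(a)))),\ q'(p(a))\big)$. The retraction point $(B,k',q',s',p')$ is said to be composable with $(A,k,q,s,p)$ if $(A,\pi_1,q'',s s',p'p)$ is a retraction point from the set $A\times_B Y$ to $C$. *)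

(* Defs.v *)
Set Implicit Arguments.

Record UMagma := {
  car :> Type;
  mop : car -> car -> car;
  mzero : car;
  mop_0r : forall b, mop b mzero = b;
  mop_0l : forall b, mop mzero b = b }.

Arguments mop {_}.
Arguments mzero {_}.

Definition is_morph {M N : UMagma} (f : M -> N) : Prop :=
  (forall x y, f (mop x y) = mop (f x) (f y)) /\ f mzero = mzero.

Definition retraction_point {X : Type} {B A : UMagma}
  (k : X -> A) (q : A -> X) (s : B -> A) (p : A -> B) : Prop :=
  is_morph s /\ is_morph p /\
  (forall b, p (s b) = b) /\
  (forall x, q (k x) = x) /\
  (forall x, p (k x) = mzero) /\
  (forall b, q (s b) = q mzero) /\
  (forall a, mop (k (q a)) (s (p a)) = a).

Definition pullback {A B : UMagma} {Y : Type} (p : A -> B) (k' : Y -> B) :=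
  { ay : A * Y | p (fst ay) = k' (snd ay) }.

Definition pb_proj1 {A B : UMagma} {Y : Type} (p : A -> B) (k' : Y -> B)
  (z : pullback p k') : A := fst (proj1_sig z).

Lemma qpp_in_pullback {X Y : Type} {A B C : UMagma}
  (k : X -> A) (q : A -> X) (s : B -> A) (p : A -> B)
  (k' : Y -> B) (q' : B -> Y) (s' : C -> B) (p' : B -> C) :
  retraction_point k q s p ->
  forall a, p (mop (k (q a)) (s (k' (q' (p a))))) = k' (q' (p a)).
Proof.
  intros [Hs [[Hp Hp0] [Hps [_ [Hpk _]]]]] a.
  rewrite Hp, Hpk, Hps. apply mop_0l.
Qed.

Definition qpp {X Y : Type} {A B C : UMagma}
  (k : X -> A) (q : A -> X) (s : B -> A) (p : A -> B)
  (k' : Y -> B) (q' : B -> Y) (s' : C -> B) (p' : B -> C)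
  (H : retraction_point k q s p) (a : A) : pullback p k' :=
  exist _ (mop (k (q a)) (s (k' (q' (p a)))), q' (p a))
    (qpp_in_pullback k' q' s' p' H a).

Definition composable {X Y : Type} {A B C : UMagma}
  (k : X -> A) (q : A -> X) (s : B -> A) (p : A -> B)
  (k' : Y -> B) (q' : B -> Y) (s' : C -> B) (p' : B -> C)
  (H : retraction_point k q s p) : Prop :=
  retraction_point (@pb_proj1 A B Y p k') (qpp k' q' s' p' H)
    (fun c => s (s' c)) (fun a => p' (p a)).

(* Main.v *)
Require Import Defs.
From Stdlib Require Import ProofIrrelevance.

Theorem proposition2p2 (X : Type) (A B : UMagma)
  (k : X -> A) (q : A -> X) (s : B -> A) (p : A -> B)
  (H : retraction_point k q s p) :
  (forall x b b', mop (k x) (s (mop b b')) = mop (mop (k x) (s b)) (s b')) ->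
  forall (Y : Type) (C : UMagma)
    (k' : Y -> B) (q' : B -> Y) (s' : C -> B) (p' : B -> C),
    retraction_point k' q' s' p' ->
    composable k' q' s' p' H.
Proof.
  intros Hass Y C k' q' s' p' H'.
  pose proof H as H0.
  destruct H0 as [[Hs Hs0] [[Hp Hp0] [Hps [Hqk [Hpk [Hqs Hkqsp]]]]]].
  destruct H' as [[Hs' Hs'0] [[Hp' Hp'0] [Hps' [Hqk' [Hpk' [Hqs' Hkqsp']]]]]].
  unfold composable, retraction_point, is_morph.
  repeat split.
  - intros x y. rewrite Hs', Hs. reflexivity.
  - rewrite Hs'0, Hs0. reflexivity.
  - intros x y. rewrite Hp, Hp'. reflexivity.
  - rewrite Hp0, Hp'0. reflexivity.
  - intros c. rewrite Hps, Hps'. reflexivity.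
  - intros [[a y] e]. unfold qpp, pb_proj1. simpl in *.
    apply subset_eq_compat. rewrite e, Hqk'. rewrite <- e, Hkqsp. reflexivity.
  - intros [[a y] e]. unfold pb_proj1. simpl in *. rewrite e, Hpk'. reflexivity.
  - intros c. unfold qpp. apply subset_eq_compat.
    rewrite Hps, Hqs, Hqs', Hp0. reflexivity.
  - intros a. unfold qpp, pb_proj1. simpl.
    rewrite <- Hass, Hkqsp'. apply Hkqsp.
Qed.
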